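(* Let $S$ be a group and $A,B$ left $S$-acts without zero subacts. Then: (i) $A$ and $B\amalg z$ are not geometrically equivalent; (ii) $A$ and $B\amalg(z_1\amalg z_2)$ are not geometrically equivalent.
   Context: A left $S$-act is a nonempty set with an action $S\times A\to A$ satisfying $1a=a$, $(st)a=s(ta)$; homomorphisms preserve the action; $\amalg$ denotes coproduct (disjoint union). A zero $S$-act is a one-element $S$-act; $z,z_1,z_2$ denote zero $S$-acts. A zero subact is a one-element subact. For a nonempty finite set $X$, $F_X=\coprod_{x\in X}S_x$ is the free $S$-act on $X$. For an $S$-act $G$ and a relation $T\subseteq F_X\times F_X$, $T'_G=\{\mu:F_X\to G \text{ homomorphism}: T\subseteq\ker\mu\}$ and $T''_G=\bigcap_{\mu\in T'_G}\ker\mu$ (empty intersection $=F_X\times F_X$). $S$-acts $G_1,G_2$ are geometrically equivalent iff $T''_{G_1}=T''_{G_2}$ for all nonempty finite $X$ and all $T\subseteq F_X\times F_X$. *)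

(* Defs.v *)
From Stdlib Require Import List.
Set Implicit Arguments.

Record Group := {
  g_car :> Type;
  g_mul : g_car -> g_car -> g_car;
  g_one : g_car;
  g_inv : g_car -> g_car;
  g_mulA : forall x y z, g_mul x (g_mul y z) = g_mul (g_mul x y) z;
  g_mul1l : forall x, g_mul g_one x = x;
  g_mul1r : forall x, g_mul x g_one = x;
  g_mulVl : forall x, g_mul (g_inv x) x = g_one;
  g_mulVr : forall x, g_mul x (g_inv x) = g_one
}.

Record Act (S : Group) := {
  a_car :> Type;
  a_act : g_car S -> a_car -> a_car;
  a_act1 : forall a, a_act (g_one S) a = a;
  a_actM : forall s t a, a_act (g_mul S s t) a = a_act s (a_act t a);
  a_nonempty : inhabited a_car
}.
Arguments a_act {S} _ _ _.

Definition coprod_act_fun (S : Group) (A B : Act S) (s : S) (p : A + B) : A + B :=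
  match p with inl a => inl (a_act A s a) | inr b => inr (a_act B s b) end.

Definition coprod (S : Group) (A B : Act S) : Act S.
Proof.
  refine {| a_car := (A + B)%type; a_act := coprod_act_fun A B |}.
  - intros [a|b]; simpl; f_equal; apply a_act1.
  - intros s t [a|b]; simpl; f_equal; apply a_actM.
  - destruct (a_nonempty A) as [a]; exact (inhabits (inl a)).
Defined.

Definition is_zero_act (S : Group) (Z : Act S) : Prop :=
  forall a b : Z, a = b.

(* A zero subact of A: a one-element subact, i.e. a fixed point {a}. *)
Definition is_zero_subact (S : Group) (A : Act S) (a : A) : Prop :=
  forall s : S, a_act A s a = a.

Definition no_zero_subacts (S : Group) (A : Act S) : Prop :=
  forall a : A, ~ is_zero_subact A a.

Definition finite_nonempty (X : Type) : Prop :=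
  inhabited X /\ exists l : list X, forall x : X, In x l.

(* The free S-act F_X = coprod_{x in X} S_x, carrier X * S, action s(x,t) = (x, st). *)
Definition free_act_fun (S : Group) (X : Type) (s : S) (p : X * S) : X * S :=
  (fst p, g_mul S s (snd p)).

Definition is_hom_free (S : Group) (X : Type) (G : Act S) (mu : X * S -> G) : Prop :=
  forall (s : S) (p : X * S), mu (@free_act_fun S X s p) = a_act G s (mu p).

Definition T_prime (S : Group) (X : Type) (G : Act S) (T : X * S -> X * S -> Prop)
  (mu : X * S -> G) : Prop :=
  is_hom_free G mu /\ forall p q, T p q -> mu p = mu q.

(* T''_G : intersection of the kernels of all mu in T'_G (full relation if empty). *)
Definition T_second (S : Group) (X : Type) (G : Act S) (T : X * S -> X * S -> Prop)
  (p q : X * S) : Prop :=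
  forall mu : X * S -> G, T_prime G T mu -> mu p = mu q.

Definition geom_equiv (S : Group) (G1 G2 : Act S) : Prop :=
  forall (X : Type), finite_nonempty X ->
  forall (T : X * S -> X * S -> Prop) (p q : X * S),
    T_second G1 T p q <-> T_second G2 T p q.

(* Main.v *)
Require Import Defs.
From Stdlib Require Import List.
Import ListNotations.

Lemma key (S : Group) (A G : Act S) (hA : no_zero_subacts A) (e b : G)
  (he : forall s, a_act G s e = e) (hbe : b <> e) : ~ geom_equiv A G.
Proof.
  intro H.
  assert (Hf : finite_nonempty bool).
  { split. exact (inhabits true). exists [true; false].
    intros [|]; simpl; auto. }
  pose (T := fun p q : bool * S => fst p = true /\ fst q = true).
  assert (HA : T_second A T (false, g_one S) (true, g_one S)).
  { intros mu [Hh Ht]. exfalso. apply (hA (mu (true, g_one S))).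
    intro s. rewrite <- Hh. unfold free_act_fun; simpl.
    rewrite g_mul1r. symmetry. apply Ht. split; reflexivity. }
  apply (H bool Hf T) in HA.
  pose (mu := fun p : bool * S => if fst p then e else a_act G (snd p) b).
  assert (Hm : T_prime G T mu).
  { split.
    - intros s [[|] t]; unfold mu, free_act_fun; simpl.
      + symmetry; apply he.
      + apply a_actM.
    - intros p q [Hp Hq]. unfold mu. rewrite Hp, Hq. reflexivity. }
  specialize (HA mu Hm). unfold mu in HA; simpl in HA.
  rewrite a_act1 in HA. exact (hbe HA).
Qed.

Theorem proposition3p17 (S : Group) (A B : Act S)
  (hA : no_zero_subacts A) (hB : no_zero_subacts B) :
  (forall z : Act S, is_zero_act z -> ~ geom_equiv A (coprod B z)) /\
  (forall z1 z2 : Act S, is_zero_act z1 -> is_zero_act z2 ->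
     ~ geom_equiv A (coprod B (coprod z1 z2))).
Proof.
  split.
  - intros z hz H. destruct (a_nonempty B) as [b0]. destruct (a_nonempty z) as [c].
    refine (@key S A (coprod B z) hA (inr c) (inl b0) _ _ H).
    + intro s. simpl. f_equal. apply hz.
    + discriminate.
  - intros z1 z2 hz1 hz2 H. destruct (a_nonempty B) as [b0]. destruct (a_nonempty z1) as [c].
    refine (@key S A (coprod B (coprod z1 z2)) hA (inr (inl c)) (inl b0) _ _ H).
    + intro s. simpl. f_equal. f_equal. apply hz1.
    + discriminate.
Qed.
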